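(* Let $G=(V,E)$ be a graph of order $n\ge 9$ such that $\tau(G)=\tau=n-4$ and its $\tau$-set $W$ satisfies $G[W]\cong K_\tau$. If $|N(W)\setminus W|=2$, then $\beta_p(G)=n-3$.
   Context: All graphs are finite, simple, undirected and connected. $N(W)=\bigcup_{v\in W}N(v)$. Two vertices $u,v$ are twins if $N(u)\setminus\{v\}=N(v)\setminus\{u\}$; the twin number $\tau(G)$ is the maximum cardinality of an equivalence class of the twin relation; a $\tau$-set is a set of pairwise twin vertices of cardinality $\tau(G)$. For a partition $\Pi=\{S_1,\dots,S_k\}$ of $V$, $r(u|\Pi)=(d(u,S_1),\dots,d(u,S_k))$ with $d(u,S)=\min_{w\in S}d(u,w)$; $\Pi$ is locating if $r(u|\Pi)\ne r(v|\Pi)$ for all distinct $u,v$; $\beta_p(G)$ is the minimum size of a locating partition. *)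

(* Defs.v *)
From mathcomp Require Import all_boot.
Set Implicit Arguments. Unset Strict Implicit. Unset Printing Implicit Defensive.

Section Graph.
Variables (T : finType) (e : rel T).

Definition simple_graph : Prop := symmetric e /\ irreflexive e.
Definition connected_graph : Prop := forall u v : T, connect e u v.

Definition nbhd (v : T) : {set T} := [set x | e v x].
Definition nbhd_set (W : {set T}) : {set T} := \bigcup_(v in W) nbhd v.

Fixpoint ball (k : nat) (u : T) : {set T} :=
  match k with
  | 0 => [set u]
  | k'.+1 => ball k' u :|: nbhd_set (ball k' u)
  end.

(* graph distance; in a connected graph every distance is < #|T|,
   so the default value #|T| is never reached *)
Definition dist (u v : T) : nat :=
  \big[minn/#|T|]_(k < #|T| | v \in ball k u) k.

(* d(u,S) = min_{w in S} d(u,w) (S nonempty in our uses) *)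
Definition dist_set (u : T) (S : {set T}) : nat :=
  \big[minn/#|T|]_(w in S) dist u w.

Definition twins (u v : T) : bool := nbhd u :\ v == nbhd v :\ u.

Definition twin_class (v : T) : {set T} := [set u | twins u v].
Definition twin_number : nat := \max_(v : T) #|twin_class v|.

Definition tau_set (W : {set T}) : Prop :=
  (forall u v, u \in W -> v \in W -> twins u v) /\ #|W| = twin_number.

Definition is_clique (W : {set T}) : Prop :=
  forall u v, u \in W -> v \in W -> u != v -> e u v.

Definition locating_partition (P : {set {set T}}) : bool :=
  partition P [set: T] &&
  [forall u, forall v, (u != v) ==>
     [exists S in P, dist_set u S != dist_set v S]].

(* partition dimension beta_p(G): minimum size of a locating partition
   (the partition into singletons is locating, so the min is attained) *)
Definition partition_dimension : nat :=
  \big[minn/#|T|]_(P : {set {set T}} | locating_partition P) #|P|.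

End Graph.

(* Main.v *)
Require Import Defs.
From mathcomp Require Import all_boot zify.
Set Implicit Arguments. Unset Strict Implicit. Unset Printing Implicit Defensive.

Lemma bigmin_le (I : finType) (P : pred I) (F : I -> nat) d j :
  P j -> \big[minn/d]_(i | P i) F i <= F j.
Proof.
move=> Pj; rewrite -big_filter.
have : j \in [seq i <- index_enum I | P i] by rewrite mem_filter Pj mem_index_enum.
elim: [seq _ <- _ | _] => [|x s IH] //=.
rewrite big_cons in_cons => /orP [/eqP <-|/IH H]; first exact: geq_minl.
exact: leq_trans (geq_minr _ _) H.
Qed.

Lemma bigmin_ge (I : finType) (P : pred I) (F : I -> nat) d m :
  m <= d -> (forall i, P i -> m <= F i) -> m <= \big[minn/d]_(i | P i) F i.
Proof.
move=> md H; apply: (big_ind (fun x => m <= x)) => //.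
by move=> x y; rewrite leq_min => -> ->.
Qed.

Section Dist.
Variables (T : finType) (e : rel T).
Hypotheses (sym : symmetric e) (irr : irreflexive e) (T2 : 2 <= #|T|).

Lemma ball1 u x : (x \in ball e 1 u) = (x == u) || e u x.
Proof. by rewrite /= /nbhd_set big_set1 !inE. Qed.

Lemma dist_le u v k : v \in ball e k u -> k < #|T| -> dist e u v <= k.
Proof. by move=> H kT; exact: (@bigmin_le _ _ _ _ (Ordinal kT)). Qed.

Lemma dist_ge u v m : m <= #|T| -> (forall k, k < m -> v \notin ball e k u) ->
  m <= dist e u v.
Proof.
move=> mT H; apply: bigmin_ge => // k Hk; rewrite leqNgt; apply/negP => km.
by move: (H _ km); rewrite Hk.
Qed.

Lemma dist_self u : dist e u u = 0.
Proof.
apply/eqP; rewrite -leqn0; apply: dist_le; first by rewrite /= inE.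
exact: leq_trans T2.
Qed.

Lemma dist_pos u v : u != v -> 1 <= dist e u v.
Proof.
move=> uv; apply: dist_ge; first exact: leq_trans T2.
by case=> // _; rewrite /= inE eq_sym.
Qed.

Lemma dist_adj u v : e u v -> dist e u v <= 1.
Proof. by move=> H; apply: dist_le => //; rewrite ball1 H orbT. Qed.

Lemma dist_nadj u v : u != v -> ~~ e u v -> 2 <= dist e u v.
Proof.
move=> uv nuv; apply: dist_ge => //.
case=> [|[|]] // _; first by rewrite /= inE eq_sym.
by rewrite ball1 eq_sym (negbTE uv) (negbTE nuv).
Qed.

Definition tc (u : T) (S : {set T}) : nat :=
  if u \in S then 0 else if [exists y in S, e u y] then 1 else 2.

Lemma ds0 u (S : {set T}) : u \in S -> dist_set e u S = 0.
Proof.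
move=> uS; apply/eqP; rewrite -leqn0.
by apply: leq_trans (bigmin_le _ _ uS) _; rewrite dist_self.
Qed.

Lemma ds_pos u (S : {set T}) : u \notin S -> 1 <= dist_set e u S.
Proof.
move=> uS; apply: bigmin_ge; first exact: leq_trans T2.
move=> w wS; apply: dist_pos; apply: contraNneq uS => ->; exact: wS.
Qed.

Lemma ds1 u (S : {set T}) y : u \notin S -> y \in S -> e u y -> dist_set e u S = 1.
Proof.
move=> uS yS uy; apply/eqP; rewrite eqn_leq ds_pos // andbT.
exact: leq_trans (bigmin_le _ _ yS) (dist_adj uy).
Qed.

Lemma ds2 u (S : {set T}) : u \notin S -> (forall y, y \in S -> ~~ e u y) -> 2 <= dist_set e u S.
Proof.
move=> uS H; apply: bigmin_ge => // w wS; apply: dist_nadj; last exact: H.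
by apply: contraNneq uS => ->.
Qed.

Lemma tcE u (S : {set T}) : minn (dist_set e u S) 2 = tc u S.
Proof.
rewrite /tc; case: ifP => uS; first by rewrite ds0.
case: (boolP [exists y in S, e u y]) => [/existsP [y /andP [yS uy]]|nex].
  by rewrite (ds1 (negbT uS) yS uy).
apply/minn_idPr; apply: ds2; first by rewrite uS.
by move=> y yS; apply/negP => uy; move/negP: nex; apply; apply/existsP; exists y; rewrite yS.
Qed.

Lemma tc_neq u v (S : {set T}) : tc u S != tc v S -> dist_set e u S != dist_set e v S.
Proof. by apply: contra => /eqP H; rewrite -!tcE H. Qed.

Lemma ds_eq1 u (S : {set T}) : tc u S = 1 -> dist_set e u S = 1.
Proof. by rewrite -tcE; case: (dist_set e u S) => [|[|n]]. Qed.

Lemma twin_ball u v : twins e u v -> e u v -> forall k, ball e k.+1 u = ball e k.+1 v.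
Proof.
move=> /eqP tw uv; elim=> [|k IH]; last by rewrite /= -!/(ball e k.+1 _) IH.
apply/setP => x; rewrite !ball1.
have [->|xu] := eqVneq x u; first by rewrite sym uv orbT.
have [->|xv] := eqVneq x v; first by rewrite uv orbT.
move/setP: tw => /(_ x); rewrite !inE xu xv /=; done.
Qed.

Lemma twin_dist u v x : twins e u v -> e u v -> x != u -> x != v ->
  dist e u x = dist e v x.
Proof.
move=> tw uv xu xv; apply: eq_bigl => -[[|k] kT] /=; first by rewrite !inE (negbTE xu) (negbTE xv).
by rewrite -!/(ball e k.+1 _) (twin_ball tw uv).
Qed.

End Dist.

Definition madj (ab ac ad bc bd cd : bool) (i j : nat) : bool :=
  match i, j with
  | 0, 1 | 1, 0 => true
  | 0, 2 | 0, 3 | 1, 2 | 1, 3 | 2, 0 | 3, 0 | 2, 1 | 3, 1 => true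
  | 2, 3 | 3, 2 => ab
  | 2, 4 | 4, 2 => ac
  | 2, 5 | 5, 2 => ad
  | 3, 4 | 4, 3 => bc
  | 3, 5 | 5, 3 => bd
  | 4, 5 | 5, 4 => cd
  | _, _ => false
  end.

Definition mtc (E : nat -> nat -> bool) (col : seq nat) (i m : nat) : nat :=
  if nth 0 col i == nth 0 col m then 0
  else if has (fun k => (nth 0 col k == nth 0 col m) && E i k) (iota 0 6) then 1 else 2.

Definition mgen (i : nat) : nat := if i < 4 then 1 else 2.

Definition good (E : nat -> nat -> bool) (col : seq nat) : bool :=
  all (fun i => all (fun j => (i == j) || (mgen i != mgen j) ||
        has (fun m => mtc E col i m != mtc E col j m) (iota 0 6)) (iota 0 6)) (iota 0 6).

Definition cands : seq (seq nat) :=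
  [:: [:: 0; 1; 0; 1; 2; 2]; [:: 0; 1; 0; 2; 0; 1]; [:: 0; 1; 0; 1; 0; 2]].

Lemma finite_check ab ac ad bc bd cd :
  ~~ [&& ab, ~~ ac & ~~ ad] -> ~~ [&& ab, ~~ bc & ~~ bd] ->
  has (good (madj ab ac ad bc bd cd)) cands.
Proof. by case: ab; case: ac; case: ad; case: bc; case: bd; case: cd. Qed.
Section Lower.
Variables (T : finType) (e : rel T) (W : {set T}) (a : T).
Hypotheses (sym : symmetric e) (irr : irreflexive e) (T2 : 2 <= #|T|).
Hypotheses (twW : forall u v, u \in W -> v \in W -> twins e u v)
  (clq : is_clique e W) (aW : a \notin W) (aadj : forall w, w \in W -> e w a).

Lemma lower P : locating_partition e P -> #|W| < #|P|.
Proof.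
case/andP => partP /forallP loc.
have [/eqP covP tiP _] := and3P partP.
have inP x : pblock P x \in P by apply: pblock_mem; rewrite covP inE.
have inB x : x \in pblock P x by rewrite mem_pblock covP inE.
have blk S x : S \in P -> x \in S -> pblock P x = S by move=> SP xS; exact: def_pblock.
have loc' u v : u != v -> exists2 S, S \in P & dist_set e u S != dist_set e v S.
  move=> uv; move: (loc u) => /forallP /(_ v); rewrite uv /= => /existsP [S /andP [SP H]].
  by exists S.
have inj : {in W &, injective (pblock P)}.
  move=> w1 w2 w1W w2W eqb; apply/eqP; apply/negPn/negP => w12.
  have [S SP] := loc' _ _ w12; apply/negP; rewrite negbK.
  case: (boolP (w1 \in S)) => w1S.
    have w2S : w2 \in S by rewrite -(blk _ _ SP w1S) eqb inB.
    by rewrite (ds0 e T2 w1S) (ds0 e T2 w2S).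
  have w2S : w2 \notin S.
    by apply: contra w1S => w2S; rewrite -(blk _ _ SP w2S) -eqb inB.
  apply/eqP; apply: eq_bigr => x xS; apply: (twin_dist sym).
  - exact: twW.
  - exact: clq.
  - by apply: contraNneq w1S => <-.
  - by apply: contraNneq w2S => <-.
rewrite ltnNge; apply/negP => cardle.
have sub : pblock P @: W \subset P by apply/subsetP => B /imsetP [w _ ->].
have eqP' : pblock P @: W = P.
  by apply/eqP; rewrite eqEcard sub /= card_in_imset.
have [w wW ew] : exists2 w, w \in W & pblock P a = pblock P w.
  have : pblock P a \in pblock P @: W by rewrite eqP'.
  by case/imsetP => w wW H; exists w.
have aw : a != w by apply: contraNneq aW => ->.
have [S SP] := loc' _ _ aw; apply/negP; rewrite negbK.
case: (boolP (a \in S)) => aS.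
  have wS : w \in S by rewrite -(blk _ _ SP aS) ew inB.
  by rewrite (ds0 e T2 aS) (ds0 e T2 wS).
have wS : w \notin S by apply: contra aS => wS; rewrite -(blk _ _ SP wS) -ew inB.
move: SP; rewrite -eqP' => /imsetP [w' w'W defS].
have w'S : w' \in S by rewrite defS inB.
rewrite (ds1 T2 aS w'S) ?(ds1 T2 wS w'S) //; first by apply: clq => //; apply: contraNneq wS => ->.
by rewrite sym aadj.
Qed.
End Lower.

Section Upper.
Variables (T : finType) (e : rel T) (W : {set T}) (p q g a b c d : T) (col : seq nat).
Hypotheses (sym : symmetric e) (irr : irreflexive e) (T2 : 2 <= #|T|).
Hypotheses (pW : p \in W) (qW : q \in W) (gW : g \in W) (pq : p != q) (gp : g != p) (gq : g != q).
Hypotheses (aW : a \notin W) (bW : b \notin W) (cW : c \notin W) (dW : d \notin W).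
Hypotheses (ab0 : a != b) (ac0 : a != c) (ad0 : a != d) (bc0 : b != c) (bd0 : b != d) (cd0 : c != d).
Hypothesis cover : forall x, x \notin W -> [|| x == a, x == b, x == c | x == d].
Hypothesis adjW : forall w x, w \in W -> x \notin W -> e w x = (x == a) || (x == b).
Hypothesis clq : is_clique e W.
Hypothesis col3 : all (fun k => k < 3) col.
Let E := madj (e a b) (e a c) (e a d) (e b c) (e b d) (e c d).
Hypothesis hgood : good E col.

Lemma Npq : (p == q) = false. Proof. exact: negbTE pq. Qed.
Lemma Npg : (p == g) = false. Proof. by rewrite eq_sym (negbTE gp). Qed.
Lemma Npa : (p == a) = false. Proof. by apply/negbTE; apply: contraNneq aW => <-. Qed.
Lemma Npb : (p == b) = false. Proof. by apply/negbTE; apply: contraNneq bW => <-. Qed.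
Lemma Npc : (p == c) = false. Proof. by apply/negbTE; apply: contraNneq cW => <-. Qed.
Lemma Npd : (p == d) = false. Proof. by apply/negbTE; apply: contraNneq dW => <-. Qed.
Lemma Nqp : (q == p) = false. Proof. by rewrite eq_sym (negbTE pq). Qed.
Lemma Nqg : (q == g) = false. Proof. by rewrite eq_sym (negbTE gq). Qed.
Lemma Nqa : (q == a) = false. Proof. by apply/negbTE; apply: contraNneq aW => <-. Qed.
Lemma Nqb : (q == b) = false. Proof. by apply/negbTE; apply: contraNneq bW => <-. Qed.
Lemma Nqc : (q == c) = false. Proof. by apply/negbTE; apply: contraNneq cW => <-. Qed.
Lemma Nqd : (q == d) = false. Proof. by apply/negbTE; apply: contraNneq dW => <-. Qed.
Lemma Ngp : (g == p) = false. Proof. exact: negbTE gp. Qed.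
Lemma Ngq : (g == q) = false. Proof. exact: negbTE gq. Qed.
Lemma Nga : (g == a) = false. Proof. by apply/negbTE; apply: contraNneq aW => <-. Qed.
Lemma Ngb : (g == b) = false. Proof. by apply/negbTE; apply: contraNneq bW => <-. Qed.
Lemma Ngc : (g == c) = false. Proof. by apply/negbTE; apply: contraNneq cW => <-. Qed.
Lemma Ngd : (g == d) = false. Proof. by apply/negbTE; apply: contraNneq dW => <-. Qed.
Lemma Nap : (a == p) = false. Proof. by apply/negbTE; apply: contraNneq aW => ->. Qed.
Lemma Naq : (a == q) = false. Proof. by apply/negbTE; apply: contraNneq aW => ->. Qed.
Lemma Nag : (a == g) = false. Proof. by apply/negbTE; apply: contraNneq aW => ->. Qed.
Lemma Nab : (a == b) = false. Proof. exact: negbTE ab0. Qed.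
Lemma Nac : (a == c) = false. Proof. exact: negbTE ac0. Qed.
Lemma Nad : (a == d) = false. Proof. exact: negbTE ad0. Qed.
Lemma Nbp : (b == p) = false. Proof. by apply/negbTE; apply: contraNneq bW => ->. Qed.
Lemma Nbq : (b == q) = false. Proof. by apply/negbTE; apply: contraNneq bW => ->. Qed.
Lemma Nbg : (b == g) = false. Proof. by apply/negbTE; apply: contraNneq bW => ->. Qed.
Lemma Nba : (b == a) = false. Proof. by rewrite eq_sym (negbTE ab0). Qed.
Lemma Nbc : (b == c) = false. Proof. exact: negbTE bc0. Qed.
Lemma Nbd : (b == d) = false. Proof. exact: negbTE bd0. Qed.
Lemma Ncp : (c == p) = false. Proof. by apply/negbTE; apply: contraNneq cW => ->. Qed.
Lemma Ncq : (c == q) = false. Proof. by apply/negbTE; apply: contraNneq cW => ->. Qed.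
Lemma Ncg : (c == g) = false. Proof. by apply/negbTE; apply: contraNneq cW => ->. Qed.
Lemma Nca : (c == a) = false. Proof. by rewrite eq_sym (negbTE ac0). Qed.
Lemma Ncb : (c == b) = false. Proof. by rewrite eq_sym (negbTE bc0). Qed.
Lemma Ncd : (c == d) = false. Proof. exact: negbTE cd0. Qed.
Lemma Ndp : (d == p) = false. Proof. by apply/negbTE; apply: contraNneq dW => ->. Qed.
Lemma Ndq : (d == q) = false. Proof. by apply/negbTE; apply: contraNneq dW => ->. Qed.
Lemma Ndg : (d == g) = false. Proof. by apply/negbTE; apply: contraNneq dW => ->. Qed.
Lemma Nda : (d == a) = false. Proof. by rewrite eq_sym (negbTE ad0). Qed.
Lemma Ndb : (d == b) = false. Proof. by rewrite eq_sym (negbTE bd0). Qed.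
Lemma Ndc : (d == c) = false. Proof. by rewrite eq_sym (negbTE cd0). Qed.
Let neqs := (Npq, Npg, Npa, Npb, Npc, Npd, Nqp, Nqg, Nqa, Nqb, Nqc, Nqd, Ngp, Ngq, Nga, Ngb, Ngc, Ngd, Nap, Naq, Nag, Nab, Nac, Nad, Nbp, Nbq, Nbg, Nba, Nbc, Nbd, Ncp, Ncq, Ncg, Nca, Ncb, Ncd, Ndp, Ndq, Ndg, Nda, Ndb, Ndc).

Definition sp i := nth p [:: p; q; a; b; c; d] i.
Definition idx x := if x == p then 0 else if x == q then 1 else if x == a then 2
  else if x == b then 3 else if x == c then 4 else 5.
Definition W' := W :\ p :\ q.
Definition f (x : T) : T + 'I_3 :=
  if x \in W' then inl x else inr (inord (nth 0 col (idx x))).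
Definition cls z := [set y in [set: T] | f z == f y].
Definition P0 := preim_partition f [set: T].

Lemma idx_sp i : i < 6 -> idx (sp i) = i.
Proof. by case: i => [|[|[|[|[|[|i]]]]]] //= _; rewrite /idx ?eqxx ?neqs. Qed.

Lemma sp_notW' i : i < 6 -> sp i \notin W'.
Proof. by case: i => [|[|[|[|[|[|i]]]]]] //= _; rewrite !inE ?eqxx ?neqs ?andbF //= ?aW ?bW ?cW ?dW. Qed.

Lemma gW' : g \in W'.
Proof. by rewrite !inE gq gp gW. Qed.

Lemma notW'_sp x : x \notin W' -> exists2 i, i < 6 & x = sp i.
Proof.
rewrite !inE negb_and negbK negb_and negbK => /orP [/eqP ->|/orP [/eqP ->|/cover]].
- by exists 1.
- by exists 0.
by case/or4P => /eqP ->; [exists 2|exists 3|exists 4|exists 5].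
Qed.

Lemma fsp i : i < 6 -> f (sp i) = inr (inord (nth 0 col i)).
Proof. by move=> i6; rewrite /f (negbTE (sp_notW' i6)) idx_sp. Qed.

Lemma E_sp i j : i < 6 -> j < 6 -> e (sp i) (sp j) = E i j.
Proof.
rewrite /E.
case: i => [|[|[|[|[|[|i]]]]]] //= _; case: j => [|[|[|[|[|[|j]]]]]] //= _;
first [ by rewrite irr | by rewrite clq // ?neqs | by rewrite adjW ?neqs ?eqxx ?orbT
      | by rewrite sym adjW ?neqs ?eqxx ?orbT | by rewrite sym | done ].
Qed.

Lemma col_lt3 i : nth 0 col i < 3.
Proof.
case: (ltnP i (size col)) => H; first by apply: (allP col3); exact: mem_nth.
by rewrite nth_default.
Qed.

Lemma cls_inl x y : x \in W' -> (y \in cls x) = (y == x).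
Proof.
move=> xW; rewrite !inE /f xW; case: ifP => yW; first by rewrite eq_sym.
by apply/esym/negbTE; apply: contraFneq yW => ->.
Qed.

Lemma cls_sp i m : i < 6 -> m < 6 -> (sp i \in cls (sp m)) = (nth 0 col i == nth 0 col m).
Proof.
move=> i6 m6; rewrite !inE !fsp //=.
apply/eqP/eqP => [[H]|->] //.
by move/(congr1 val): H; rewrite /= !inordK ?col_lt3.
Qed.

Lemma tc_gen i : i < 6 -> tc e (sp i) (cls g) = mgen i.
Proof.
move=> i6; rewrite /tc cls_inl ?gW' //.
have -> : (sp i == g) = false.
  by apply/negbTE; apply: contraNneq (sp_notW' i6) => ->; exact: gW'.
have -> : [exists y in cls g, e (sp i) y] = e (sp i) g.
  apply/existsP/idP => [[y /andP [yg H]]|H].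
    by move: yg; rewrite cls_inl ?gW' // => /eqP <-.
  by exists g; rewrite cls_inl ?gW' // eqxx.
move: i6; case: i => [|[|[|[|[|[|i]]]]]] //= _;
first [ by rewrite clq // ?neqs | by rewrite sym adjW ?neqs ?eqxx ?orbT ].
Qed.

Lemma cls_notW' m y : m < 6 -> y \in cls (sp m) -> y \notin W'.
Proof.
move=> m6 ym; apply/negP => yW; move: ym; by rewrite !inE fsp // /f yW.
Qed.

Lemma tc_sp i m : i < 6 -> m < 6 -> tc e (sp i) (cls (sp m)) = mtc E col i m.
Proof.
move=> i6 m6; rewrite /tc /mtc cls_sp //.
case: ifP => // _.
have -> : [exists y in cls (sp m), e (sp i) y] =
          has (fun k => (nth 0 col k == nth 0 col m) && E i k) (iota 0 6).
  apply/existsP/hasP => [[y /andP [ym H]] | [k kin /andP [km Ek]]].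
    have [k k6 yk] := notW'_sp (cls_notW' m6 ym).
    exists k; first by rewrite mem_iota.
    by rewrite -cls_sp // -yk ym -E_sp // -yk.
  have k6 : k < 6 by move: kin; rewrite mem_iota.
  by exists (sp k); rewrite cls_sp // km E_sp.
done.
Qed.

Lemma clsP z : cls z \in P0.
Proof. by apply/imsetP; exists z. Qed.

Lemma loc0 : locating_partition e P0.
Proof.
rewrite /locating_partition preim_partitionP /=.
apply/forallP => u; apply/forallP => v; apply/implyP => uv.
suff [z Hz] : exists z, tc e u (cls z) != tc e v (cls z).
  by apply/existsP; exists (cls z); rewrite clsP (tc_neq T2).
case: (boolP (u \in W')) => uW'.
  exists u; rewrite /tc !cls_inl // eqxx [v == u]eq_sym (negbTE uv).
  by case: ([exists _ in _, _]).
case: (boolP (v \in W')) => vW'.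
  exists v; rewrite /tc !cls_inl // eqxx (negbTE uv).
  by case: ([exists _ in _, _]).
move: uv; have [i i6 ->] := notW'_sp uW'; have [j j6 ->] := notW'_sp vW' => uv.
have ij : i != j by apply: contraNneq uv => ->.
have := allP hgood i; rewrite mem_iota add0n => /(_ i6) /allP /(_ j).
rewrite mem_iota add0n => /(_ j6); rewrite (negbTE ij) orFb => /orP [H|/hasP [m mi H]].
  by exists g; rewrite !tc_gen //.
have m6 : m < 6 by move: mi; rewrite mem_iota.
exists (sp m); rewrite !tc_sp //.
Qed.

Lemma cardP0 : #|P0| <= #|W| + 1.
Proof.
have -> : P0 = (fun r => [set y in [set: T] | r == f y]) @: (f @: [set: T]).
  rewrite -imset_comp /P0 /preim_partition /equivalence_partition.
  by apply: eq_imset => x /=.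
apply: leq_trans (leq_imset_card _ _) _.
have sub : f @: [set: T] \subset (@inl T 'I_3 @: W') :|: (@inr T 'I_3 @: [set: 'I_3]).
  apply/subsetP => r /imsetP [x _ ->]; rewrite /f; case: ifP => xW.
    by rewrite inE imset_f.
  by rewrite inE imset_f ?orbT // inE.
apply: leq_trans (subset_leq_card sub) _.
apply: leq_trans (leq_card_setU _ _).1 _.
rewrite !card_imset; try by move=> x y [].
rewrite cardsT card_ord (cardsD1 p W) pW (cardsD1 q (W :\ p)) !inE qW eq_sym pq /=.
by rewrite /W' addn3 !add1n addn1.
Qed.
End Upper.

Theorem lemma26 (T : finType) (e : rel T) (W : {set T}) :
  simple_graph e -> connected_graph e ->
  9 <= #|T| ->
  twin_number e = #|T| - 4 ->
  tau_set e W ->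
  is_clique e W ->
  #|nbhd_set e W :\: W| = 2 ->
  partition_dimension e = #|T| - 3.
Proof.
move=> [sym irr] _ T9 tn [twW cardW] clq hN.
have T2 : 2 <= #|T| by apply: leq_trans T9.
have cardW4 : #|W| = #|T| - 4 by rewrite cardW tn.
move/eqP/cards2P: hN => [a [b [ab hab]]].
have aN : a \in nbhd_set e W :\: W by rewrite hab !inE eqxx.
have bN : b \in nbhd_set e W :\: W by rewrite hab !inE eqxx orbT.
have aW : a \notin W by move: aN; rewrite inE => /andP [].
have bW : b \notin W by move: bN; rewrite inE => /andP [].
have adjW : forall w x, w \in W -> x \notin W -> e w x = (x == a) || (x == b).
  move=> w x wW xW; apply/idP/idP => [wx|].
    have : x \in nbhd_set e W :\: W.
      by rewrite inE xW /=; apply/bigcupP; exists w; rewrite // inE.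
    by rewrite hab !inE.
  suff H : forall z, z \in nbhd_set e W :\: W -> e w z.
    by case/orP => /eqP ->; apply: H; rewrite hab !inE eqxx ?orbT.
  move=> z; rewrite inE => /andP [zW /bigcupP [w' w'W]]; rewrite inE => w'z.
  have [->|ww'] := eqVneq w w'; first done.
  have zw : z != w by apply: contraNneq zW => ->.
  have zw' : z != w' by apply: contraNneq zW => ->.
  move: (twW _ _ w'W wW) => /eqP /setP /(_ z).
  by rewrite !inE zw zw' w'z /= => <-.
set R := ~: (W :|: [set a; b]).
have cU : #|W :|: [set a; b]| = #|W| + 2.
  rewrite cardsU cards2 ab.
  have -> : W :&: [set a; b] = set0.
    apply/setP => x; rewrite !inE; apply/negbTE/negP => /andP [xW /orP [] /eqP xe].
      by move: aW; rewrite -xe xW.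
    by move: bW; rewrite -xe xW.
  by rewrite cards0 subn0.
have cR : #|R| = 2.
  move: (cardsC (W :|: [set a; b])); rewrite -/R cU cardW4; move: T9.
  move: #|T| #|R| => n r. lia.
move/eqP/cards2P: cR => [c [d [cd hR]]].
have : c \in R by rewrite hR !inE eqxx.
rewrite /R !inE !negb_or => /and3P [cW ca cb].
have : d \in R by rewrite hR !inE eqxx orbT.
rewrite /R !inE !negb_or => /and3P [dW da db].
have cover : forall x, x \notin W -> [|| x == a, x == b, x == c | x == d].
  move=> x xW; case xR : (x \in R).
    by move: xR; rewrite hR !inE => /orP [] ->; rewrite ?orbT.
  move: xR; rewrite /R !inE (negbTE xW) /= => /negbFE /orP [] ->; rewrite ?orbT //.
have W5 : 5 <= #|W| by rewrite cardW4; move: T9; move: #|T| => n; lia.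
have /card_gt0P [p pW] : 0 < #|W| by apply: leq_trans W5.
have c1 := cardsD1 p W; rewrite pW in c1.
have /card_gt0P [q qWp] : 0 < #|W :\ p|.
  by move: W5; rewrite c1 /= add1n ltnS => H; exact: leq_trans _ H.
have c2 := cardsD1 q (W :\ p); rewrite qWp in c2.
have /card_gt0P [g gWpq] : 0 < #|W :\ p :\ q|.
  by move: W5; rewrite c1 c2 /= !add1n !ltnS => H; exact: leq_trans _ H.
move: qWp; rewrite !inE => /andP [qp qW].
move: gWpq; rewrite !inE => /and3P [gq gp gW].
have pq : p != q by rewrite eq_sym.
have notwin : forall z, z \notin W -> ~~ twins e z p.
  move=> z zW; apply/negP => tz.
  have sub : z |: W \subset twin_class e p.
    apply/subsetP => u; rewrite !inE => /orP [/eqP ->|uW] //; exact: twW.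
  have := subset_leq_card sub; rewrite cardsU1 zW.
  have := @leq_bigmax T (fun v => #|twin_class e v|) p.
  rewrite -/(twin_number e) -cardW => H1 H2.
  by move: (leq_trans H2 H1); rewrite add1n ltnn.
have mktwin : forall z, z \notin W -> (z == a) || (z == b) ->
    (forall x, x \notin W -> x != z -> e z x = (x == a) || (x == b)) -> twins e z p.
  move=> z zW zab H; apply/eqP/setP => x; rewrite !inE.
  case: (boolP (x \in W)) => xW.
    have xz : x != z by apply: contraNneq zW => <-.
    have [->|xp] := eqVneq x p; first by rewrite irr andbF.
    have px : p != x by rewrite eq_sym.
    by rewrite xz /= (clq p x pW xW px) sym (adjW x z xW zW).
  have xp : x != p by apply: contraNneq xW => ->.
  have [->|xz] := eqVneq x z; first by rewrite irr andbF.
  by rewrite xp /= H // (adjW p x pW xW).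
have v1 : ~~ [&& e a b, ~~ e a c & ~~ e a d].
  apply/negP => /and3P [h1 h2 h3]; move/negP: (notwin a aW); apply.
  apply: mktwin => //; first by rewrite eqxx.
  move=> x xW xa; move: (cover x xW); rewrite (negbTE xa) /=.
  case/or3P => /eqP ->.
  - by rewrite ?h1 ?eqxx ?(negbTE h2) ?(negbTE h3) ?(negbTE ca) ?(negbTE cb) ?(negbTE da) ?(negbTE db) ?orbT ?orbF.
  - by rewrite ?h1 ?eqxx ?(negbTE h2) ?(negbTE h3) ?(negbTE ca) ?(negbTE cb) ?(negbTE da) ?(negbTE db) ?orbT ?orbF.
  - by rewrite ?h1 ?eqxx ?(negbTE h2) ?(negbTE h3) ?(negbTE ca) ?(negbTE cb) ?(negbTE da) ?(negbTE db) ?orbT ?orbF.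
have v2 : ~~ [&& e b a, ~~ e b c & ~~ e b d].
  apply/negP => /and3P [h1 h2 h3]; move/negP: (notwin b bW); apply.
  apply: mktwin => //; first by rewrite eqxx orbT.
  move=> x xW xb; move: (cover x xW); rewrite (negbTE xb) /=.
  case/or3P => /eqP ->.
  - by rewrite ?h1 ?eqxx ?(negbTE h2) ?(negbTE h3) ?(negbTE ca) ?(negbTE cb) ?(negbTE da) ?(negbTE db) ?orbT ?orbF.
  - by rewrite ?h1 ?eqxx ?(negbTE h2) ?(negbTE h3) ?(negbTE ca) ?(negbTE cb) ?(negbTE da) ?(negbTE db) ?orbT ?orbF.
  - by rewrite ?h1 ?eqxx ?(negbTE h2) ?(negbTE h3) ?(negbTE ca) ?(negbTE cb) ?(negbTE da) ?(negbTE db) ?orbT ?orbF.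
rewrite [e b a]sym in v2.
have H := @finite_check (e a b) (e a c) (e a d) (e b c) (e b d) (e c d) v1 v2.
case/hasP: H => col colin hg.
have col3 : all (fun k => k < 3) col.
  by move: colin; rewrite !inE => /or3P [] /eqP ->.
have ac : a != c by rewrite eq_sym.
have ad : a != d by rewrite eq_sym.
have bc : b != c by rewrite eq_sym.
have bd : b != d by rewrite eq_sym.
have L := loc0 sym irr T2 pW qW gW pq gp gq aW bW cW dW ab ac ad bc bd cd cover adjW clq col3 hg.
have C := cardP0 a b c col pW qW pq.
have hW1 : #|W| + 1 = #|T| - 3.
  by rewrite cardW4 addn1 -subSn ?subSS //; apply: leq_trans T9.
apply/eqP; rewrite eqn_leq; apply/andP; split.
  by rewrite -hW1; apply: leq_trans (bigmin_le _ _ L) C.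
apply: bigmin_ge; first exact: leq_subr.
move=> P LP; rewrite -hW1 addn1.
apply: (lower sym T2 twW clq aW _ LP) => w wW.
by rewrite (adjW w a wW aW) eqxx.
Qed.
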